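(* Let $3\le m\le n$ and $r=m-1$. Then $\mathrm{Hrk}^\circ_{m-1}(m,n)=\mathrm{Hrk}^{\max}_{m-1}(m,n)=2$.
   Context: Work over $\mathbb{C}$. $A\star B$ denotes the entrywise (Hadamard) product of matrices, and for projective varieties $X,Y\subset\mathbb{P}^N$, $X\star Y$ is the Zariski closure of the set of entrywise products $p\star q$ ($p\in X,q\in Y$, $p\star q$ not the zero vector); $X^{\star1}=X$, $X^{\star s}=X\star X^{\star(s-1)}$. $X_r\subset\mathbb{P}(\mathrm{Mat}_{m,n})$ is the variety of $m\times n$ matrices of rank at most $r$. For a matrix $M$, $\mathrm{Hrk}_r(M)=\min\{s\mid M=A_1\star\cdots\star A_s,\ \mathrm{rk}(A_i)\le r\}$. $\mathrm{Hrk}_r^\circ(m,n)=\min\{s\mid X_r^{\star s}=\mathbb{P}(\mathrm{Mat}_{m,n})\}$ and $\mathrm{Hrk}_r^{\max}(m,n)=\max\{\mathrm{Hrk}_r(M)\mid M\in\mathrm{Mat}_{m,n}\}$. *)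

(* Defs.v *)
(* Base field: algC (algebraically closed, char 0), standing for C. *)
From HB Require Import structures.
From mathcomp Require Import all_boot all_order all_algebra all_field.
Unset Printing Implicit Defensive.
Import GRing.Theory Num.Theory.
Local Open Scope ring_scope.

Definition hadamard {m n : nat} (A B : 'M[algC]_(m, n)) : 'M[algC]_(m, n) :=
  \matrix_(i, j) (A i j * B i j).

Inductive mpoly (V : Type) : Type :=
| MConst of algC
| MVar of V
| MAdd of mpoly V & mpoly V
| MMul of mpoly V & mpoly V.
Arguments MConst {V}. Arguments MVar {V}. Arguments MAdd {V}. Arguments MMul {V}.

Fixpoint meval {V : Type} (p : mpoly V) (e : V -> algC) : algC :=
  match p with
  | MConst c => c
  | MVar v => e v
  | MAdd p q => meval p e + meval q e
  | MMul p q => meval p e * meval q e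
  end.

Definition mxpoly_eval {m n : nat} (p : mpoly ('I_m * 'I_n)) (M : 'M[algC]_(m, n)) : algC :=
  meval p (fun ij => M ij.1 ij.2).

(* Zariski closure of a subset of Mat_{m,n} (affine space). Projective varieties
   of P(Mat_{m,n}) are represented by their affine cones. *)
Definition zclosure {m n : nat} (S : 'M[algC]_(m, n) -> Prop) : 'M[algC]_(m, n) -> Prop :=
  fun M => forall p : mpoly ('I_m * 'I_n),
    (forall A, S A -> mxpoly_eval p A = 0) -> mxpoly_eval p M = 0.

(* Affine cone over X_r: matrices of rank at most r. *)
Definition rankvar (m n r : nat) : 'M[algC]_(m, n) -> Prop :=
  fun A => (\rank A <= r)%N.

Definition hstar {m n : nat} (X Y : 'M[algC]_(m, n) -> Prop) : 'M[algC]_(m, n) -> Prop :=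
  zclosure (fun M => exists A B, [/\ X A, Y B, hadamard A B != 0 & M = hadamard A B]).

Fixpoint Xstar (m n r : nat) (s : nat) : 'M[algC]_(m, n) -> Prop :=
  match s with
  | 0 => rankvar m n r            (* s = 0 never used: Hrk ranges over s >= 1 *)
  | 1 => rankvar m n r
  | s'.+1 => hstar (rankvar m n r) (Xstar m n r s')
  end.

Definition is_least (P : nat -> Prop) (k : nat) : Prop :=
  [/\ (0 < k)%N, P k & forall s, (0 < s)%N -> (s < k)%N -> ~ P s].

Definition hdecomp {m n : nat} (r s : nat) (M : 'M[algC]_(m, n)) : Prop :=
  exists As : 'I_s -> 'M[algC]_(m, n),
    (forall i, (\rank (As i) <= r)%N) /\
    M = \big[hadamard / const_mx 1]_(i < s) As i.

Definition Hrk_is {m n : nat} (r : nat) (M : 'M[algC]_(m, n)) (k : nat) : Prop :=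
  is_least (fun s => hdecomp r s M) k.

Definition Hrk_gen_is (m n r k : nat) : Prop :=
  is_least (fun s => forall M : 'M[algC]_(m, n), Xstar m n r s M) k.

Definition Hrk_max_is (m n r k : nat) : Prop :=
  [/\ forall M : 'M[algC]_(m, n), exists s, Hrk_is r M s,
      forall (M : 'M[algC]_(m, n)) s, Hrk_is r M s -> (s <= k)%N
    & exists M : 'M[algC]_(m, n), Hrk_is r M k].

(* Main.v *)
Require Import Defs.
From mathcomp Require Import all_boot all_order all_algebra all_field.
From mathcomp Require Import ring.
From mathcomp Require Import zify.
Import GRing.Theory Num.Theory.
Local Open Scope ring_scope.

Definition sol (c0 c1 c2 : algC) : (algC * algC * algC) * (algC * algC * algC) :=
  if c0 == 0 then ((0,1,-1),(c2-c1,c1,-c2))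
  else if c1 == 0 then ((1,0,-1),(c0,c2-c0,-c2))
  else if c2 == 0 then ((1,-1,0),(c0,-c1,c1-c0))
  else let B := c0+c1-c2 in
       let t := (sqrtC (B^+2 - 4*c0*c1) - B)/(2*c0) in
       ((1,t,-1-t),(c0, c1/t, -c2/(1+t))).

Lemma sol_spec c0 c1 c2 :
  let s := sol c0 c1 c2 in
  [/\ s.1.1.1 * s.2.1.1 = c0, s.1.1.2 * s.2.1.2 = c1, s.1.2 * s.2.2 = c2,
      s.1.1.1 + s.1.1.2 + s.1.2 = 0 & s.2.1.1 + s.2.1.2 + s.2.2 = 0].
Proof.
rewrite /sol.
have [->|h0] := eqVneq c0 0; first by split => /=; ring.
have [->|h1] := eqVneq c1 0; first by split => /=; ring.
have [->|h2] := eqVneq c2 0; first by split => /=; ring.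
set B : algC := c0+c1-c2.
set t : algC := (_ / _).
have two0 : (2:algC) != 0 by rewrite pnatr_eq0.
have four0 : (4:algC) != 0 by rewrite pnatr_eq0.
have q : c0 * t^+2 + B * t + c1 = 0.
  have -> : c0 * t^+2 + B * t + c1 =
     ((sqrtC (B^+2 - 4*c0*c1))^+2 - (B^+2 - 4*c0*c1)) / (4 * c0).
    by rewrite /t; field.
  by rewrite sqrtCK subrr mul0r.
have Bd : B = c0+c1-c2 by [].
clearbody t B.
have t0 : t != 0.
  by apply: contra h1 => /eqP tz; rewrite tz in q; apply/eqP; rewrite -q; ring.
have t1 : 1 + t != 0.
  apply: contra h2 => /eqP tz.
  have te : t = -1 by rewrite -[t](addKr 1) tz addr0.
  rewrite te Bd in q; apply/eqP; rewrite -q; ring.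
split => /=; try ring.
- by field.
- by field.
- have -> : c0 + c1 / t + - c2 / (1 + t) = (c0 * t^+2 + B * t + c1) / (t * (1 + t)).
    by rewrite Bd; field; rewrite ?t0 ?t1.
  by rewrite q mul0r.
Qed.

Section Constr.
Variables (k n : nat) (M : 'M[algC]_(k.+3, n)).

Definition colsol (j : 'I_n) := sol (M ord0 j) (M (inord 1) j) (M (inord 2) j).

Definition Amx : 'M[algC]_(k.+3, n) := \matrix_(i, j)
  match val i with 0 => (colsol j).1.1.1 | 1 => (colsol j).1.1.2
  | 2 => (colsol j).1.2 | _ => M i j end.
Definition Bmx : 'M[algC]_(k.+3, n) := \matrix_(i, j)
  match val i with 0 => (colsol j).2.1.1 | 1 => (colsol j).2.1.2
  | 2 => (colsol j).2.2 | _ => 1 end.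

Lemma hadAB : hadamard Amx Bmx = M.
Proof.
apply/matrixP => i j; rewrite !mxE.
case: (sol_spec (M ord0 j) (M (inord 1) j) (M (inord 2) j)) => e0 e1 e2 _ _.
case: i => [[|[|[|i]]] Hi] /=.
- rewrite /colsol e0; congr (M _ j); exact: val_inj.
- rewrite /colsol e1; congr (M _ j); apply: val_inj; by rewrite /= inordK.
- rewrite /colsol e2; congr (M _ j); apply: val_inj; by rewrite /= inordK.
- by rewrite mulr1.
Qed.

Definition vrow : 'rV[algC]_(k.+3) := \row_i (if (val i < 3)%N then 1 else 0).

Lemma sum3 (F : 'I_(k.+3) -> algC) :
  (forall i : 'I_(k.+3), (3 <= val i)%N -> F i = 0) ->
  \sum_i F i = F ord0 + F (inord 1) + F (inord 2).
Proof.
move=> H; rewrite big_ord_recl big_ord_recl big_ord_recl big1 ?addr0.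
  rewrite !addrA; congr (_ + _ + _); congr F; apply: val_inj;
    by rewrite /= ?lift0 inordK.
move=> i _; apply: H; rewrite /= /bump !leq0n /=; lia.
Qed.

Lemma rank_le (A : 'M[algC]_(k.+3, n)) :
  vrow *m A = 0 -> (\rank A <= k.+2)%N.
Proof.
move=> h.
have v0 : vrow != 0.
  apply/eqP => /rowP /(_ ord0); rewrite !mxE /=; apply/eqP; exact: oner_neq0.
have := mxrankS (introT sub_kermxP h); rewrite mxrank_ker rank_rV v0.
move: (rank_leq_row A); lia.
Qed.

Lemma vA : vrow *m Amx = 0.
Proof.
apply/rowP => j; rewrite !mxE.
rewrite (sum3 (fun i => vrow 0 i * Amx i j)).
  rewrite !mxE /= !inordK //= !mul1r.
  by case: (sol_spec (M ord0 j) (M (inord 1) j) (M (inord 2) j)).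
move=> i hi; rewrite !mxE; case: ifP => //; last by rewrite mul0r.
move=> h; exfalso; move: hi h; case: (val i) => //; lia.
Qed.

Lemma vB : vrow *m Bmx = 0.
Proof.
apply/rowP => j; rewrite !mxE.
rewrite (sum3 (fun i => vrow 0 i * Bmx i j)).
  rewrite !mxE /= !inordK //= !mul1r.
  by case: (sol_spec (M ord0 j) (M (inord 1) j) (M (inord 2) j)).
move=> i hi; rewrite !mxE; case: ifP => //; last by rewrite mul0r.
move=> h; exfalso; move: hi h; case: (val i) => //; lia.
Qed.

End Constr.

Fixpoint tp {V : Type} (p : mpoly V) : {poly algC} :=
  match p with
  | MConst c => c%:P
  | MVar _ => 'X
  | MAdd p q => tp p + tp q
  | MMul p q => tp p * tp q
  end.

Lemma tp_eval {m n : nat} (p : mpoly ('I_m * 'I_n)) (t : algC) :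
  mxpoly_eval p (const_mx t) = (tp p).[t].
Proof.
rewrite /mxpoly_eval; elim: p => [c|v|p IHp q IHq|p IHp q IHq] /=.
- by rewrite hornerC.
- by rewrite mxE hornerX.
- by rewrite hornerD IHp IHq.
- by rewrite hornerM IHp IHq.
Qed.

Lemma poly_nz_roots (q : {poly algC}) :
  (forall t, t != 0 -> q.[t] = 0) -> q.[0] = 0.
Proof.
move=> h; have [->|qn0] := eqVneq q 0; first by rewrite horner0.
exfalso.
set rs := [seq (i.+1)%:R : algC | i <- iota 0 (size q)].
have ha : all (root q) rs.
  apply/allP => x /mapP [i _ ->]; apply/eqP/h; by rewrite pnatr_eq0.
have hu : uniq rs.
  rewrite map_inj_uniq ?iota_uniq // => a b /eqP; rewrite eqr_nat => /eqP [].
  done.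
have := max_poly_roots qn0 ha hu.
by rewrite size_map size_iota ltnn.
Qed.

Lemma had1 {m n : nat} (A : 'M[algC]_(m, n)) : hadamard A (const_mx 1) = A.
Proof. by apply/matrixP => i j; rewrite !mxE mulr1. Qed.

Lemma hdecomp1 {m n : nat} r (M : 'M[algC]_(m, n)) :
  hdecomp r 1 M <-> (\rank M <= r)%N.
Proof.
split.
- by case=> As [hr ->]; rewrite big_ord_recl big_ord0 had1.
- move=> h; exists (fun _ => M); split => //.
  by rewrite big_ord_recl big_ord0 had1.
Qed.

Lemma hdecomp2 k n (M : 'M[algC]_(k.+3, n)) : hdecomp k.+2 2 M.
Proof.
exists (fun i : 'I_2 => if val i == 0%N then @Amx k n M else @Bmx k n M); split.
- move=> i; case: ifP => _; apply: rank_le; [exact: (@vA k n M) | exact: (@vB k n M)].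
- by rewrite big_ord_recl big_ord_recl big_ord0 /= had1 (@hadAB k n M).
Qed.

Lemma pid_full k n : (k.+3 <= n)%N -> ~ (\rank (pid_mx (k.+3) : 'M[algC]_(k.+3, n)) <= k.+2)%N.
Proof. by move=> hn; rewrite rank_pid_mx // ltnn. Qed.

Theorem proposition4p17 (m n : nat) (h3 : (3 <= m)%N) (hmn : (m <= n)%N) :
  Hrk_gen_is m n (m - 1) 2 /\ Hrk_max_is m n (m - 1) 2.
Proof.
case: m h3 hmn => [|[|[|k]]] // _ hmn.
have -> : (k.+3 - 1 = k.+2)%N by rewrite subn1.
case: n hmn => [|n] // hmn.
have Hnot1 := @pid_full k n.+1 hmn.
have H2 : forall s (M : 'M[algC]_(k.+3, n.+1)), Hrk_is k.+2 M s -> (s <= 2)%N.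
  move=> s M [s0 _ hl]; rewrite leqNgt; apply/negP => hs.
  exact: (hl 2%N isT hs (@hdecomp2 k n.+1 M)).
split.
- split => //.
  + move=> M /=; move=> p hp.
    have [->|Mn0] := eqVneq M 0.
      have -> : (0 : 'M[algC]_(k.+3, n.+1)) = const_mx 0
        by apply/matrixP => i j; rewrite !mxE.
      rewrite tp_eval; apply: poly_nz_roots => t t0.
      rewrite -tp_eval; apply: hp.
      have [A [hA hB]] := @hdecomp2 k n.+1 (const_mx t : 'M[algC]_(k.+3, n.+1)).
      rewrite big_ord_recl big_ord_recl big_ord0 /= had1 in hB.
      exists (A ord0), (A (lift ord0 ord0)); split; try exact: hA.
      rewrite -hB; apply/negP => /eqP/matrixP/(_ ord0 ord0); rewrite !mxE => /eqP.
      exact/negP.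
      exact: hB.
    apply: hp.
    have [A [hA hB]] := @hdecomp2 k n.+1 M.
    rewrite big_ord_recl big_ord_recl big_ord0 /= had1 in hB.
    by exists (A ord0), (A (lift ord0 ord0)); split; try exact: hA; rewrite -hB.
  + move=> [|[|s]] // _ _ /(_ (pid_mx k.+3)) /=; exact: Hnot1.
- split.
  + move=> M; case hr: (\rank M <= k.+2)%N.
    * exists 1%N; split => //; first by apply/hdecomp1.
      by move=> [|s].
    * exists 2%N; split => //; first exact: hdecomp2.
      move=> [|[|s]] // _ _ /hdecomp1; by rewrite hr.
  + move=> M s; exact: H2.
  + exists (pid_mx k.+3); split => //; first exact: hdecomp2.
    move=> [|[|s]] // _ _ /hdecomp1; exact: Hnot1.
Qed.
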